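(* Let $f:\mathbb{R}^n\to\mathbb{R}$ be convex and differentiable with $\nabla f$ $L$-Lipschitz continuous, and assume $X^*$ is non-empty. Then the sequences $\{x^k\},\{z^k\}$ generated by Algorithm 3 (with $\nabla f(x^k)\ne0$ for all $k$) satisfy, for every $x^*\in X^*$ and every $k$, $$\|x^{k+1}-x^*\|^2\le\|x^k-x^*\|^2-\kappa_4\|x^k-z^k\|^2,$$ where $\kappa_4=\eta(2-\eta)\alpha_{\min}\left((1-\beta)\left(1-\frac{L\overline{h}}{4}\right)+\beta(1-\nu)\right)>0$ and $\alpha_{\min}=\frac{(1-\beta)\left(1-\frac{L\overline{h}}{4}\right)+\beta(1-\nu)}{2+2\beta^2\nu^2}$.
   Context: $X^*=\{x:\nabla f(x)=0\}$ (the set of minimizers of the convex $f$). Algorithm 3: parameters $0<\mu<\nu<1$, $0<\underline{h}<1\le\gamma_0^0\le\overline{h}<\frac4L$, $0\le\beta\le1$, $\theta\in(0,1)$, $\tau>1$, $\eta\in(0,2)$, starting point $x^0$; run while $\nabla f(x^k)\neq0$. At iteration $k$: for $\gamma>0$ let $z^k(\gamma)=x^k-\gamma\nabla f(x^k)$ and $r_k(\gamma)=\gamma\|\nabla f(z^k(\gamma))-\nabla f(x^k)\|/\|z^k(\gamma)-x^k\|$; starting from $\gamma_0^k$, while $r_k(\gamma_l^k)>\nu$ set $\gamma_{l+1}^k=\gamma_l^k\theta\min\{1,1/r_k(\gamma_l^k)\}$; let $h_k$ be the first $\gamma_l^k$ with $r_k(\gamma_l^k)\le\nu$. Then $z^k=x^k-h_k\nabla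 f(x^k)$ and $x^{k+1}=x^k-\eta\alpha_kh_k\big(\nabla f(x^k)-\beta(\nabla f(x^k)-\nabla f(z^k))\big)$ with $$\alpha_k=\frac{(1-\beta)\left(1-\frac{Lh_k}{4}\right)\|x^k-z^k\|^2+\beta\langle x^k-z^k,h_k\nabla f(z^k)\rangle}{h_k^2\|\nabla f(x^k)-\beta(\nabla f(x^k)-\nabla f(z^k))\|^2};$$ finally $\gamma_0^{k+1}=\mathbf{P}_{[\underline{h},\overline{h}]}(\tau h_k)$ if $r_k(h_k)\le\mu$, else $\gamma_0^{k+1}=\mathbf{P}_{[\underline{h},\overline{h}]}(h_k)$, where $\mathbf{P}_{[a,b]}$ is projection onto $[a,b]$. *)

(* Defs.v *)
From HB Require Import structures.
From mathcomp Require Import all_boot all_order all_algebra.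
From mathcomp Require Import all_classical all_reals all_analysis.
Set Implicit Arguments. Unset Strict Implicit. Unset Printing Implicit Defensive.
Import Order.TTheory GRing.Theory Num.Theory.
Import numFieldNormedType.Exports.
Local Open Scope ring_scope.

Section Defs.
Variables (R : realType) (n : nat).
Notation vec := 'rV[R]_n.

Definition inner (u v : vec) : R := \sum_(i < n) u ord0 i * v ord0 i.
Definition enorm (u : vec) : R := Num.sqrt (inner u u).

Definition convex_fun (f : vec -> R) : Prop :=
  forall (x y : vec) (t : R), 0 <= t -> t <= 1 ->
    f (t *: x + (1 - t) *: y) <= t * f x + (1 - t) * f y.

Definition is_gradient (f : vec -> R) (g : vec -> vec) : Prop :=
  forall x : vec, differentiable f x /\ forall v : vec, 'd f x v = inner (g x) v.

Definition lipschitz_grad (g : vec -> vec) (L : R) : Prop :=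
  forall x y : vec, enorm (g x - g y) <= L * enorm (x - y).

Definition proj_int (a b t : R) : R := Num.max a (Num.min b t).

Definition ratio (g : vec -> vec) (x : vec) (gam : R) : R :=
  let z := x - gam *: g x in
  gam * enorm (g z - g x) / enorm (z - x).

Definition ls_step (g : vec -> vec) (x : vec) (theta gam : R) : R :=
  gam * theta * Num.min 1 (1 / ratio g x gam).

Definition ls_seq (g : vec -> vec) (x : vec) (theta gam0 : R) (l : nat) : R :=
  iter l (ls_step g x theta) gam0.

Definition ls_result (g : vec -> vec) (x : vec) (theta nu gam0 h : R) : Prop :=
  exists l : nat,
    [/\ ratio g x (ls_seq g x theta gam0 l) <= nu,
        (forall j : nat, (j < l)%N -> nu < ratio g x (ls_seq g x theta gam0 j))
      & h = ls_seq g x theta gam0 l].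

Definition alpha_step (g : vec -> vec) (L beta : R) (x z : vec) (h : R) : R :=
  ((1 - beta) * (1 - L * h / 4) * enorm (x - z) ^+ 2
     + beta * inner (x - z) (h *: g z))
  / (h ^+ 2 * enorm (g x - beta *: (g x - g z)) ^+ 2).

Definition algorithm3 (g : vec -> vec)
    (L mu nu hlow hbar beta theta tau eta : R) (x0 : vec)
    (x z : nat -> vec) (h gam0 : nat -> R) : Prop :=
  x 0%N = x0 /\
  [/\ forall k, g (x k) != 0,
      forall k, ls_result g (x k) theta nu (gam0 k) (h k),
      forall k, z k = x k - h k *: g (x k),
      forall k, x k.+1 = x k - (eta * alpha_step g L beta (x k) (z k) (h k) * h k)
                                *: (g (x k) - beta *: (g (x k) - g (z k)))
    & forall k, gam0 k.+1 =
        if ratio g (x k) (h k) <= mu then proj_int hlow hbar (tau * h k)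
        else proj_int hlow hbar (h k)].

End Defs.

(* Main.v *)
Require Import Defs.
From HB Require Import structures.
From mathcomp Require Import all_boot all_order all_algebra.
From mathcomp Require Import all_classical all_reals all_analysis.
Import Order.TTheory GRing.Theory Num.Theory.
Import numFieldNormedType.Exports.
From mathcomp Require Import ring lra.
Local Open Scope ring_scope.

Set Implicit Arguments. Unset Strict Implicit.

Section Inner.
Variables (R : realType) (n : nat).
Notation vec := 'rV[R]_n.
Implicit Types u v w : vec.

Lemma innerC u v : inner u v = inner v u.
Proof. by apply: eq_bigr => i _; rewrite mulrC. Qed.

Lemma innerDl u v w : inner (u + v) w = inner u w + inner v w.
Proof. by rewrite /inner -big_split; apply: eq_bigr => i _; rewrite mxE mulrDl. Qed.

Lemma innerZl a u v : inner (a *: u) v = a * inner u v.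
Proof. by rewrite /inner mulr_sumr; apply: eq_bigr => i _; rewrite mxE mulrA. Qed.

Lemma innerNl u v : inner (- u) v = - inner u v.
Proof. by rewrite -scaleN1r innerZl mulN1r. Qed.

Lemma innerBl u v w : inner (u - v) w = inner u w - inner v w.
Proof. by rewrite innerDl innerNl. Qed.

Lemma innerDr u v w : inner w (u + v) = inner w u + inner w v.
Proof. by rewrite !(innerC w) innerDl. Qed.
Lemma innerZr a u v : inner v (a *: u) = a * inner v u.
Proof. by rewrite !(innerC v) innerZl. Qed.
Lemma innerNr u v : inner v (- u) = - inner v u.
Proof. by rewrite !(innerC v) innerNl. Qed.
Lemma innerBr u v w : inner w (u - v) = inner w u - inner w v.
Proof. by rewrite innerDr innerNr. Qed.
Lemma inner0l u : inner 0 u = 0.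
Proof. by rewrite -(scale0r 0) innerZl mul0r. Qed.

Lemma inner_ge0 u : 0 <= inner u u.
Proof. by apply: sumr_ge0 => i _; rewrite -expr2 sqr_ge0. Qed.

Lemma enorm_ge0 u : 0 <= enorm u.
Proof. exact: sqrtr_ge0. Qed.

Lemma enorm_sq u : enorm u ^+ 2 = inner u u.
Proof. by rewrite /enorm sqr_sqrtr // inner_ge0. Qed.

Lemma inner_eq0 u : inner u u = 0 -> u = 0.
Proof.
move=> H; apply/rowP => i; rewrite mxE.
have := H; rewrite /inner => /eqP; rewrite psumr_eq0 => [/allP/(_ i)|j _]; last first.
  by rewrite -expr2 sqr_ge0.
rewrite mem_index_enum => /(_ isT) /implyP /(_ isT).
by rewrite mulf_eq0 orbb => /eqP; rewrite (ord1 ord0).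
Qed.

Lemma enorm0P u : enorm u = 0 -> u = 0.
Proof. by move=> H; apply: inner_eq0; rewrite -enorm_sq H expr0n. Qed.

Lemma CS u v : inner u v <= enorm u * enorm v.
Proof.
have [/enorm0P ->|nu] := eqVneq (enorm u) 0.
  by rewrite inner0l mulr_ge0 // enorm_ge0.
have [/enorm0P ->|nv] := eqVneq (enorm v) 0.
  by rewrite innerC inner0l mulr_ge0 // enorm_ge0.
have key : 0 <= inner (enorm v *: u - enorm u *: v) (enorm v *: u - enorm u *: v).
  exact: inner_ge0.
rewrite !(innerBl, innerBr, innerZl, innerZr) (innerC v u) in key.
rewrite -!enorm_sq in key.
have pu : 0 < enorm u by rewrite lt_def nu enorm_ge0.
have pv : 0 < enorm v by rewrite lt_def nv enorm_ge0.
have p0 : 0 < enorm u * enorm v by rewrite mulr_gt0.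
rewrite -subr_ge0.
have : 0 <= (enorm u * enorm v) * (2 * (enorm u * enorm v - inner u v)).
  by move: key; set a := enorm u; set b := enorm v; set c := inner u v => key; nra.
by rewrite pmulr_rge0 // pmulr_rge0.
Qed.

Lemma CSabs u v : - (enorm u * enorm v) <= inner u v.
Proof. by rewrite lerNl -innerNl; apply: le_trans (CS _ _) _; rewrite /enorm innerNl innerNr opprK. Qed.

Lemma enormZ a u : enorm (a *: u) = `|a| * enorm u.
Proof.
by rewrite /enorm innerZl innerZr mulrA -expr2 sqrtrM ?sqr_ge0 // sqrtr_sqr.
Qed.

Lemma enormN u : enorm (- u) = enorm u.
Proof. by rewrite /enorm innerNl innerNr opprK. Qed.

Lemma inner_expand u w b :
  inner (u + b *: w) (u + b *: w) = inner u u + 2 * b * inner u w + b ^+ 2 * inner w w.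
Proof.
rewrite !(innerDl, innerDr, innerZl, innerZr) (innerC w u); ring.
Qed.

Lemma sum_sq_le u w b :
  inner (u + b *: w) (u + b *: w) <= 2 * inner u u + 2 * b ^+ 2 * inner w w.
Proof.
have := inner_ge0 (u + (- b) *: w).
rewrite !inner_expand sqrrN; lra.
Qed.

End Inner.
Section GradIneq.
Local Open Scope classical_set_scope.

Lemma grad_ineq (R : realType) (n : nat) (f : 'rV[R]_n -> R) g :
  convex_fun f -> is_gradient f g -> forall x y, f x + inner (g x) (y - x) <= f y.
Proof.
move=> cf gf x y.
have [dfx dfe] := gf x.
set v := y - x.
rewrite -dfe -deriveE //.
have dv : derivable f x v by apply: diff_derivable.
rewrite /derive -lerBrDl.
set q := (fun h : R => _).
have cq : q @ 0^'+ --> lim (q @ 0^') by apply: cvg_dnbhs_at_right.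
apply: (ler_cvg_to cq (cvg_cst (f y - f x))).
near=> h.
have h0 : 0 < h by near: h; exact: nbhs_right_gt.
have h1 : h < 1 by near: h; apply: nbhs_right_lt.
rewrite /q /= /shift.
have -> : h *: v + x = h *: y + (1 - h) *: x.
  by rewrite /v scalerBr scalerBl scale1r -addrA [- _ + x]addrC.
have := cf y x h (ltW h0) (ltW h1).
move=> H.
rewrite -[h^-1 *: _]/(h^-1 * _) mulrC ler_pdivrMr //.
lra.
Unshelve. all: by end_near. Qed.

End GradIneq.

Lemma descent_N (R : realType) (n : nat) (f : 'rV[R]_n -> R) g L :
  convex_fun f -> is_gradient f g -> lipschitz_grad g L ->
  forall x v (N : nat), (0 < N)%N ->
  f (x + v) <= f x + inner (g x) v + L * enorm v ^+ 2 * (N.+1)%:R / (2 * N%:R).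
Proof.
move=> cf gf lg x v N N0.
set s := N%:R^-1 : R.
have s0 : 0 < s by rewrite invr_gt0 ltr0n.
set p := fun m : nat => x + (m%:R * s) *: v.
have key : forall m : nat, f (p m) <= f x + m%:R * s * inner (g x) v
    + L * enorm v ^+ 2 * s ^+ 2 * (m%:R * (m%:R + 1)) / 2.
  elim=> [|m IH].
    by rewrite /p mulr0n !mul0r scale0r addr0 mulr0 mul0r !addr0.
  have h1 := grad_ineq cf gf (p m.+1) (p m).
  have e1 : p m - p m.+1 = - (s *: v).
    rewrite -scaleNr /p opprD addrACA subrr add0r -scalerBl mulrSr; congr (_ *: _); ring.
  have e2 : p m.+1 - x = (m.+1%:R * s) *: v by rewrite /p addrC addKr.
  rewrite e1 innerNr innerZr in h1.
  have h2 : inner (g (p m.+1)) v <= inner (g x) v + L * ((m.+1%:R * s) * enorm v ^+ 2).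
    have -> : g (p m.+1) = g x + (g (p m.+1) - g x) by rewrite addrC subrK.
    rewrite innerDl lerD2l.
    apply: (le_trans (CS _ _)).
    have := lg (p m.+1) x; rewrite e2 enormZ ger0_norm; last by rewrite mulr_ge0 ?ler0n ?ltW.
    move=> H; rewrite expr2 !mulrA; apply: ler_wpM2r; first exact: enorm_ge0.
    by move: H; rewrite !mulrA.
  set a := inner (g x) v in IH h2 *.
  set b := inner (g (p m.+1)) v in h1 h2.
  set V := enorm v ^+ 2 in IH h2 *.
  set M := m%:R : R in IH.
  have eM : m.+1%:R = M + 1 :> R by rewrite mulrSr.
  rewrite eM in h2 *.
  have sb : s * b <= s * a + s * (L * ((M + 1) * s * V)) by rewrite -mulrDr ler_wpM2l // ltW.
  have E : f x + (M + 1) * s * a + L * V * s ^+ 2 * ((M + 1) * (M + 1 + 1)) / 2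
     = (f x + M * s * a + L * V * s ^+ 2 * (M * (M + 1)) / 2) + (s * a + s * (L * ((M + 1) * s * V))).
    by rewrite expr2; field.
  rewrite E; lra.
have := key N.
have eN : N%:R * s = 1 by rewrite /s mulfV // pnatr_eq0 -lt0n.
rewrite /p eN scale1r mul1r.
have -> : L * enorm v ^+ 2 * s ^+ 2 * (N%:R * (N%:R + 1)) / 2
  = L * enorm v ^+ 2 * N.+1%:R / (2 * N%:R).
  rewrite /s mulrSr; field; by rewrite pnatr_eq0 -lt0n.
by [].
Qed.

Lemma descent (R : realType) (n : nat) (f : 'rV[R]_n -> R) g L :
  convex_fun f -> is_gradient f g -> lipschitz_grad g L -> 0 <= L ->
  forall x v, f (x + v) <= f x + inner (g x) v + L / 2 * enorm v ^+ 2.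
Proof.
move=> cf gf lg L0 x v.
set c := L * enorm v ^+ 2.
have c0 : 0 <= c by rewrite /c mulr_ge0 // exprn_ge0 // enorm_ge0.
have -> : L / 2 * enorm v ^+ 2 = c / 2 by rewrite /c; field.
rewrite leNgt; apply/negP => H.
set d := f (x + v) - (f x + inner (g x) v + c / 2).
have d0 : 0 < d by rewrite /d subr_gt0.
set N := Num.bound (c / (2 * d)).
have N0 : (0 < N)%N by [].
have hN : c / (2 * d) < N%:R by apply: archi_boundP; rewrite divr_ge0 // mulr_ge0 // ltW.
have := descent_N cf gf lg x v N0.
have NR : 0 < N%:R :> R by rewrite ltr0n.
have : c / N%:R < 2 * d.
  by move: hN; rewrite !ltr_pdivrMr ?mulr_gt0 // mulrC.
have -> : L * enorm v ^+ 2 * N.+1%:R / (2 * N%:R) = c / 2 + (c / N%:R) / 2.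
  by rewrite /c mulrSr; field; rewrite gt_eqF.
move: d0; rewrite /d; lra.
Qed.

Lemma lowerE (R : realType) (n : nat) (f : 'rV[R]_n -> R) g L :
  convex_fun f -> is_gradient f g -> lipschitz_grad g L -> 0 < L ->
  forall x y, f x + inner (g x) (y - x) + inner (g y - g x) (g y - g x) / (2 * L) <= f y.
Proof.
move=> cf gf lg L0 x y.
set d := g y - g x.
set w := y - L^-1 *: d.
have h1 := grad_ineq cf gf x w.
have h2 := descent cf gf lg (ltW L0) y (w - y).
have ey : y + (w - y) = w by rewrite addrC subrK.
rewrite ey in h2.
have ew : w - y = - (L^-1 *: d) by rewrite /w addrC addKr.
have ewx : w - x = (y - x) - L^-1 *: d by rewrite /w addrAC.
rewrite ew ewx in h1 h2.
rewrite innerBr innerZr in h1.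
rewrite enormN enormZ exprMn enorm_sq innerNr innerZr in h2.
have eQ : inner (g y) d = inner (g x) d + inner d d.
  by rewrite {2}/d innerBl addrC subrK.
rewrite eQ in h2.
have Lp : 0 < L^-1 by rewrite invr_gt0.
rewrite (ger0_norm (ltW Lp)) in h2.
set A := inner (g x) (y - x) in h1 *.
set P := inner (g x) d in h1 h2.
set D := inner d d in h2 *.
have e1 : L / 2 * (L^-1 ^+ 2 * D) = L^-1 * D / 2 by field; rewrite gt_eqF.
have e2 : D / (2 * L) = L^-1 * D / 2 by field; rewrite gt_eqF.
rewrite e2; rewrite mulrDr e1 in h2; lra.
Qed.

Lemma cocoercive (R : realType) (n : nat) (f : 'rV[R]_n -> R) g L :
  convex_fun f -> is_gradient f g -> lipschitz_grad g L -> 0 < L ->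
  forall x y, inner (g x - g y) (g x - g y) / L <= inner (g x - g y) (x - y).
Proof.
move=> cf gf lg L0 x y.
have h1 := lowerE cf gf lg L0 x y.
have h2 := lowerE cf gf lg L0 y x.
have eD : inner (g y - g x) (g y - g x) = inner (g x - g y) (g x - g y).
  by rewrite -opprB innerNl innerNr opprK.
have e2 : x - y = - (y - x) by rewrite opprB.
rewrite eD in h1.
rewrite e2 innerNr in h2.
rewrite e2 innerNr (innerBl (g x) (g y) (y - x)).
set D := inner (g x - g y) (g x - g y) in h1 h2 *.
have -> : D / L = D / (2 * L) + D / (2 * L) by field; rewrite gt_eqF.
lra.
Qed.

Lemma ratio_ge0 (R : realType) n (g : 'rV[R]_n -> 'rV[R]_n) x gam :
  0 <= gam -> 0 <= Defs.ratio g x gam.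
Proof. by move=> ?; rewrite /ratio /= divr_ge0 ?mulr_ge0 ?enorm_ge0. Qed.

Lemma ls_pos (R : realType) n (g : 'rV[R]_n -> 'rV[R]_n) x theta nu gam0 l :
  0 < theta -> theta < 1 -> 0 < nu -> 0 < gam0 ->
  (forall j, (j < l)%N -> nu < Defs.ratio g x (ls_seq g x theta gam0 j)) ->
  0 < ls_seq g x theta gam0 l /\ ls_seq g x theta gam0 l <= gam0.
Proof.
move=> t0 t1 nu0 g0; elim: l => [|l IH] H; first by rewrite /ls_seq /= lexx.
have [p1 p2] : 0 < ls_seq g x theta gam0 l /\ ls_seq g x theta gam0 l <= gam0.
  by apply: IH => j jl; apply: H; rewrite ltnS ltnW.
have rl := H l (ltnSn l).
rewrite /ls_seq iterS -/(ls_seq g x theta gam0 l) /ls_step.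
set r := Defs.ratio g x _ in rl *.
set c := ls_seq _ _ _ _ _ in p1 p2 *.
have r0 : 0 < r by apply: lt_trans rl.
have m0 : 0 < Num.min 1 (1 / r) by rewrite lt_min ltr01 divr_gt0.
have m1 : Num.min 1 (1 / r) <= 1 by rewrite ge_min lexx.
split; first by rewrite !mulr_gt0.
apply: le_trans p2.
have tm : theta * Num.min 1 (1 / r) <= 1.
  have : theta * Num.min 1 (1 / r) <= theta * 1 by rewrite ler_wpM2l // ltW.
  lra.
by rewrite -mulrA ler_piMr // ltW.
Qed.

Unset Implicit Arguments. Set Strict Implicit.

Theorem proposition3 (R : realType) (n : nat)
    (f : 'rV[R]_n -> R) (g : 'rV[R]_n -> 'rV[R]_n) (L : R)
    (mu nu hlow hbar beta theta tau eta : R) (x0 : 'rV[R]_n)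
    (x z : nat -> 'rV[R]_n) (h gam0 : nat -> R) :
  convex_fun f -> is_gradient f g -> 0 < L -> lipschitz_grad g L ->
  (exists xs : 'rV[R]_n, g xs = 0) ->
  0 < mu -> mu < nu -> nu < 1 ->
  0 < hlow -> hlow < 1 -> 1 <= gam0 0%N -> gam0 0%N <= hbar -> hbar < 4 / L ->
  0 <= beta -> beta <= 1 -> 0 < theta -> theta < 1 -> 1 < tau ->
  0 < eta -> eta < 2 ->
  algorithm3 g L mu nu hlow hbar beta theta tau eta x0 x z h gam0 ->
  let alpha_min :=
    ((1 - beta) * (1 - L * hbar / 4) + beta * (1 - nu)) / (2 + 2 * beta ^+ 2 * nu ^+ 2) in
  let kappa4 :=
    eta * (2 - eta) * alpha_min * ((1 - beta) * (1 - L * hbar / 4) + beta * (1 - nu)) in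
  0 < kappa4 /\
  forall xs : 'rV[R]_n, g xs = 0 ->
  forall k : nat,
    enorm (x k.+1 - xs) ^+ 2 <= enorm (x k - xs) ^+ 2 - kappa4 * enorm (x k - z k) ^+ 2.
Proof.
move=> cf gf L0 lg _ mu0 munu nu1 hl0 hl1 g00 g0h hbL b0 b1 t0 t1 tau1 e0 e2.
move=> [_ [gx0 lsr ze xe ge]] am k4.
have nu0 : 0 < nu by apply: lt_trans munu.
have LhA : L * hbar < 4 by move: hbL; rewrite ltr_pdivlMr // mulrC.
set c := (1 - beta) * (1 - L * hbar / 4) + beta * (1 - nu).
have c0 : 0 < c.
  have A0 : 0 < 1 - L * hbar / 4 by lra.
  have B0 : 0 < 1 - nu by lra.
  rewrite /c; set A := 1 - L * hbar / 4 in A0 *; set B := 1 - nu in B0 *.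
  nra.
set K := 2 + 2 * beta ^+ 2 * nu ^+ 2.
have K0 : 0 < K by rewrite /K; have := sqr_ge0 (beta * nu); rewrite exprMn; lra.
have am0 : 0 < am by rewrite /am divr_gt0.
have ek4 : k4 = eta * (2 - eta) * am * c by [].
have eam : am = c / K by [].
have e20 : 0 < 2 - eta by lra.
split; first by rewrite ek4; do 3 apply: mulr_gt0 => //.
move=> xs gxs k.
have hlh : hlow <= hbar by lra.
have gk : 0 < gam0 k /\ gam0 k <= hbar.
  case: k => [|k]; first by split => //; lra.
  have pb : forall t, hlow <= proj_int hlow hbar t /\ proj_int hlow hbar t <= hbar.
    move=> t; rewrite /proj_int le_max lexx /= ge_max hlh /= ge_min lexx //.
  rewrite ge; case: ifP => _; have [p1 p2] := pb (tau * h k) ; have [p3 p4] := pb (h k);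
    split => //; lra.
case: gk => gk0 gkh.
have [l [rl rlt hl]] := lsr k.
have [H0 Hg] := ls_pos t0 t1 nu0 gk0 rlt.
rewrite -hl in H0 Hg rl.
have Hh : h k <= hbar by apply: le_trans Hg gkh.
have zk := ze k.
have gnz := gx0 k.
rewrite (xe k).
move: rl; rewrite /Defs.ratio /= -zk => rl.
move: (x k) (z k) (h k) zk gnz rl H0 Hh => X Z H zk gnz rl H0 Hh.
set gX := g X in zk gnz rl *.
set gZ := g Z in rl *.
set u := X - Z.
have eu : u = H *: gX by rewrite /u zk opprB addrC subrK.
have nu_pos : 0 < enorm u.
  rewrite eu enormZ ger0_norm ?ltW // mulr_gt0 // lt_def enorm_ge0 andbT.
  by apply/eqP => /enorm0P; apply/eqP.
have ezx : enorm (Z - X) = enorm u by rewrite -enormN /u opprB.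
rewrite ezx ler_pdivrMr // in rl.
set w := H *: (gZ - gX).
have ew : enorm w = H * enorm (gZ - gX) by rewrite /w enormZ ger0_norm ?ltW.
rewrite -ew in rl.
set U2 := inner u u.
have U2e : U2 = enorm u ^+ 2 by rewrite enorm_sq.
have U20 : 0 < U2 by rewrite U2e exprn_gt0.
have uw : - (nu * U2) <= inner u w.
  apply: le_trans (CSabs u w).
  rewrite lerN2 U2e expr2 mulrA [nu * _]mulrC -mulrA ler_wpM2l ?enorm_ge0 //.
have ww : inner w w <= nu ^+ 2 * U2.
  rewrite -enorm_sq U2e -exprMn.
  have := enorm_ge0 w; have := enorm_ge0 u; nra.
set hd := H *: (gX - beta *: (gX - gZ)).
have ehd : hd = u + beta *: w.
  by rewrite /hd eu /w; apply/rowP => i; rewrite !mxE; ring.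
set DD := inner hd hd.
have DDle : DD <= K * U2.
  rewrite /DD ehd; apply: le_trans (sum_sq_le _ _ _) _.
  rewrite -/U2 /K.
  have := sqr_ge0 beta.
  move: ww; set b := inner w w; nra.
have edd : H ^+ 2 * enorm (gX - beta *: (gX - gZ)) ^+ 2 = DD.
  by rewrite /DD -enorm_sq /hd enormZ exprMn ger0_norm ?ltW.
rewrite /alpha_step -/u edd.
have eHgZ : H *: g Z = u + w.
  by rewrite eu /w /gZ; apply/rowP => i; rewrite !mxE; ring.
rewrite -U2e eHgZ.
set N := (1 - beta) * (1 - L * H / 4) * U2 + beta * inner u (u + w).
set alpha := N / DD.
set Y := X - xs.
have eY : X - (eta * alpha * H) *: (gX - beta *: (gX - gZ)) - xs = Y + (- (eta * alpha)) *: hd.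
  by rewrite /Y /hd; apply/rowP => i; rewrite !mxE; ring.
rewrite eY !enorm_sq inner_expand.
have Nc : c * U2 <= N.
  rewrite /N innerDr -/U2.
  have q1 : 0 <= (1 - beta) * U2 * (L * (hbar - H)) by rewrite !mulr_ge0 // ?subr_ge0 // ltW.
  have q2 : beta * (- (nu * U2)) <= beta * inner u w by rewrite ler_wpM2l.
  have -> : c * U2 = (1 - beta) * (1 - L * H / 4) * U2 - (1 - beta) * U2 * (L * (hbar - H)) / 4
     + (beta * U2 + beta * (- (nu * U2))) by rewrite /c; ring.
  lra.
have PN : N <= inner Y hd.
  have c1 := cocoercive cf gf lg L0 X xs.
  have c2 := cocoercive cf gf lg L0 Z xs.
  rewrite gxs subr0 -/gX -/Y in c1.
  rewrite gxs subr0 -/gZ in c2.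
  have G0 : 0 <= inner gZ gZ / L by rewrite divr_ge0 ?inner_ge0 // ltW.
  have ehd2 : hd = (1 - beta) *: (H *: gX) + beta *: (H *: gZ).
    by rewrite /hd; apply/rowP => i; rewrite !mxE; ring.
  have eY2 : Y = u + (Z - xs) by rewrite /Y /u addrA subrK.
  have eP : inner Y hd = (1 - beta) * (H * inner gX Y) + beta * (H * inner u gZ)
     + beta * (H * inner (Z - xs) gZ).
    rewrite ehd2 innerDr !innerZr (innerC Y gX) {2}eY2 (innerDl u (Z - xs) gZ); ring.
  have eN : H * inner u gZ = inner u (u + w) by rewrite -eHgZ innerZr.
  rewrite eP eN.
  set G := inner gX gX in c1.
  have UG : U2 = H ^+ 2 * G by rewrite /U2 eu innerZl innerZr /G; ring.
  have q0 : 0 <= inner (Z - xs) gZ by rewrite innerC; lra.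
  have q1 : (1 - L * H / 4) * U2 <= H * inner gX Y.
    have G0' : 0 <= G by exact: inner_ge0.
    have : H * (G / L) <= H * inner gX Y by rewrite ler_wpM2l // ltW.
    have -> : H * (G / L) = (1 - L * H / 4) * U2 + H * G * (2 - L * H) ^+ 2 / (4 * L).
      by rewrite UG; field; rewrite gt_eqF.
    have : 0 <= H * G * (2 - L * H) ^+ 2 / (4 * L).
      apply: divr_ge0; last by lra.
      by rewrite mulr_ge0 ?sqr_ge0 // mulr_ge0 // ltW.
    lra.
  have b1' : 0 <= 1 - beta by lra.
  have q4 := ler_wpM2l b1' q1.
  have q3 := mulr_ge0 b0 (mulr_ge0 (ltW H0) q0).
  rewrite /N mulrA.
  lra.
rewrite -/DD.
have N0 : 0 < N by apply: lt_le_trans Nc; rewrite mulr_gt0.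
have DD0 : DD != 0.
  apply/eqP => /inner_eq0 hd0.
  by move: PN; rewrite hd0 innerC inner0l; lra.
have DDp : 0 < DD by rewrite lt_def DD0 inner_ge0.
have aDD : alpha * DD = N by rewrite /alpha divfK.
have alam : am <= alpha.
  rewrite eam /alpha ler_pdivlMr // mulrAC ler_pdivrMr //.
  apply: le_trans (ler_wpM2r (ltW K0) Nc).
  by rewrite -mulrA ler_wpM2l //; [exact: ltW | rewrite mulrC].
have al0 : 0 <= alpha by apply: le_trans alam; exact: ltW.
have Q1 : am * (c * U2) <= alpha * N.
  by apply: ler_pM => //; [exact: ltW | rewrite mulr_ge0 // ltW].
set P := inner Y hd in PN *.
have Q2 : eta * alpha * N <= eta * alpha * P by rewrite ler_wpM2l // mulr_ge0 // ltW.
have Q3 : eta * (2 - eta) * (am * (c * U2)) <= eta * (2 - eta) * (alpha * N).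
  by rewrite ler_wpM2l // mulr_ge0 // ltW.
have -> : (- (eta * alpha)) ^+ 2 * DD = eta ^+ 2 * (alpha * N).
  by rewrite -aDD; ring.
have -> : k4 * U2 = eta * (2 - eta) * (am * (c * U2)) by rewrite ek4; ring.
have -> : 2 * - (eta * alpha) * P = - 2 * (eta * alpha * P) by ring.
have eQ3 : eta * (2 - eta) * (alpha * N) = 2 * (eta * alpha * N) - eta ^+ 2 * (alpha * N) by ring.
rewrite eQ3 in Q3.
lra.
Qed.
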